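(* Let $\lambda\in\mathbb R$ and $\eta\ge0$. Let $(P_n)_{n\ge0}$ be the monic polynomials with $P_{-1}=0$, $P_0=1$, $xP_0=P_1$, $xP_1=P_2+\lambda P_1+P_0$ and $xP_n=P_{n+1}+\lambda P_n+(1+\eta)P_{n-1}$ for $n\ge2$, let $\mu_{\lambda,\eta}$ be their compactly supported orthogonality measure, and let $\partial^\dagger_{\lambda,\eta}$ be the bounded operator on $L^2(\mathbb R,\mu_{\lambda,\eta})$ determined by $\partial^\dagger_{\lambda,\eta}P_n=P_{n+1}$, $n\ge0$. Let $\Psi_{\lambda,\eta+1}(w)=\dfrac{w}{1+\lambda w+(\eta+1)w^2}$ and let $\Psi^{-1}_{\lambda,\eta+1}$ be its compositional inverse near $0$ (with $\Psi^{-1}_{\lambda,\eta+1}(0)=0$). Then there exists $\varepsilon>0$ such that for all real $z$ with $|z|<\varepsilon$, in $L^2(\mu_{\lambda,\eta})$, $$\partial^\dagger_{\lambda,\eta}(1-xz)^{-1}=\left(\frac{x-\Psi^{-1}_{\lambda,\eta+1}(z)}{1+\lambda\Psi^{-1}_{\lambda,\eta+1}(z)+\eta\bigl(\Psi^{-1}_{\lambda,\eta+1}(z)\bigr)^2}\right)(1-xz)^{-1},$$ and, for $0<|z|<\varepsilon$, with $R(z)=\sqrt{(1-\lambda z)^2-4z^2(\eta+1)}$ (principal branch, $R(0)=1$), this equals $$\left(x\,\frac{4z^2(\eta+1)^2}{\bigl(2\eta+1+\lambda z+R(z)\bigr)\bigl(1-\lambda z-R(z)\bigr)}-\frac{2z(\eta+1)}{2\eta+1+\lambda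 z+R(z)}\right)(1-xz)^{-1}.$$
   Context: For $|z|$ small, $x\mapsto(1-xz)^{-1}$ is a bounded continuous function on the support of $\mu_{\lambda,\eta}$, hence an element of $L^2(\mu_{\lambda,\eta})$; $x$ denotes multiplication by the variable. *)

(* Defs.v *)
From HB Require Import structures.
From mathcomp Require Import all_boot all_order all_algebra.
From mathcomp Require Import all_classical all_reals all_analysis.
Set Implicit Arguments. Unset Strict Implicit. Unset Printing Implicit Defensive.
Import Order.TTheory GRing.Theory Num.Theory.
Import numFieldNormedType.Exports.
Local Open Scope classical_set_scope.
Local Open Scope ring_scope.

(* The monic polynomials P_n of the statement, computed as consecutive pairs
   (P_n, P_{n+1}):
     P_0 = 1, P_1 = X,  P_2 = (X - lam) P_1 - P_0,
     P_{n+1} = (X - lam) P_n - (1 + eta) P_{n-1}  for n >= 2. *)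
Fixpoint Ppair (R : ringType) (lam eta : R) (n : nat) : {poly R} * {poly R} :=
  match n with
  | 0 => (1, 'X)
  | n'.+1 =>
      let: (p, q) := Ppair lam eta n' in
      (q, ('X - lam%:P) * q - ((if n' is 0 then 1 else 1 + eta) *: p))
  end.

Definition Ppoly (R : ringType) (lam eta : R) (n : nat) : {poly R} :=
  (Ppair lam eta n).1.

Definition sq_int (R : realType) (mu : {measure set R -> \bar R}) (f : R -> R) :=
  measurable_fun setT f /\ mu.-integrable setT (fun x => (f x ^+ 2)%:E).

(* mu is (a positive multiple of) the compactly supported orthogonality
   measure of the family Ppoly lam eta: a finite measure carried by a
   compact interval for which the P_n are orthogonal with nonzero norms.
   (For this bounded Jacobi recurrence such a measure is unique up to a
   positive scalar.) *)
Definition orth_measure (R : realType) (lam eta : R)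
    (mu : {measure set R -> \bar R}) :=
  [/\ (mu setT < +oo)%E,
      (exists M : R, mu [set x | M < `|x|] = 0%E),
      (forall m n : nat, m <> n ->
         (\int[mu]_x ((Ppoly lam eta m).[x] * (Ppoly lam eta n).[x])%:E = 0)%E) &
      (forall n : nat,
         (0 < \int[mu]_x (((Ppoly lam eta n).[x]) ^+ 2)%:E)%E)].

(* D represents a bounded linear operator on L^2(mu) (acting on
   representatives; identities hold mu-a.e.) with D P_n = P_{n+1}. *)
Definition creation_op (R : realType) (lam eta : R)
    (mu : {measure set R -> \bar R}) (D : (R -> R) -> (R -> R)) :=
  [/\ (forall f g, sq_int mu f -> sq_int mu g ->
         {ae mu, forall x, D (f \+ g) x = D f x + D g x}),
      (forall (a : R) f, sq_int mu f ->
         {ae mu, forall x, D (fun y => a * f y) x = a * D f x}),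
      (exists C : R, forall f, sq_int mu f ->
         sq_int mu (D f) /\
         (\int[mu]_x ((D f x) ^+ 2)%:E <= C%:E * \int[mu]_x ((f x) ^+ 2)%:E)%E) &
      (forall n : nat,
         {ae mu, forall x, D (fun y => (Ppoly lam eta n).[y]) x
                           = (Ppoly lam eta n.+1).[x]})].

Definition Psi (R : realType) (lam eta : R) (w : R) : R :=
  w / (1 + lam * w + (eta + 1) * w ^+ 2).

Definition local_inverse_Psi (R : realType) (lam eta : R) (Winv : R -> R) :=
  [/\ Winv 0 = 0, {for 0, continuous Winv} &
      exists d : R, 0 < d /\ forall z : R, `|z| < d ->
         Psi lam eta (Winv z) = z].

(* Main.v *)
Require Import Defs.
From HB Require Import structures.
From mathcomp Require Import all_boot all_order all_algebra.
From mathcomp Require Import all_classical all_reals all_analysis.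
From mathcomp Require Import ring lra measurable_realfun.
Import Order.TTheory GRing.Theory Num.Theory.
Import numFieldNormedType.Exports.
Local Open Scope classical_set_scope.
Local Open Scope ring_scope.
Lemma measurable_sq (R : realType) (f : R -> R) : measurable_fun setT f ->
  measurable_fun setT (fun x => (f x ^+ 2)%:E).
Proof. by move=> mf; apply/measurable_EFinP; exact: measurable_funX. Qed.

Lemma aeS (R : realType) (mu : {measure set R -> \bar R}) (M : R) :
  mu [set x | M < `|x|] = 0%E -> {ae mu, forall x, `|x| <= M}.
Proof.
move=> h0.
have mN : measurable [set x : R | M < `|x|].
  have := @normr_measurable R setT measurableT _ (measurable_itv `]M, +oo[).
  rewrite setTI.
  suff -> : [set x : R | M < `|x|] = (@Num.Def.normr _ R) @^-1` `]M, +oo[ by [].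
  by apply/seteqP; split => x /=; rewrite in_itv /= andbT.
exists [set x | M < `|x|]; split => // x /=.
by move=> h; rewrite ltNge; apply/negP.
Qed.

Lemma int_sq_bnd (R : realType) (mu : {measure set R -> \bar R}) (f : R -> R) (B : R) :
  measurable_fun setT f -> {ae mu, forall x, `|f x| <= B} ->
  (\int[mu]_x (f x ^+ 2)%:E <= (B ^+ 2)%:E * mu setT)%E.
Proof.
move=> mf hB.
rewrite -integral_cst //.
apply: ae_ge0_le_integral => //.
- by move=> x _; rewrite lee_fin sqr_ge0.
- exact: measurable_sq.
- by move=> x _; rewrite lee_fin sqr_ge0.
apply: filterS hB => x hx _.
rewrite lee_fin /=.
have hB0 : 0 <= B by apply: le_trans hx.
move: hx; rewrite ler_norml => /andP[h1 h2].
nra.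
Qed.

Lemma sq_int_bnd (R : realType) (mu : {measure set R -> \bar R}) (f : R -> R) :
  (mu setT < +oo)%E -> measurable_fun setT f ->
  (exists B, {ae mu, forall x, `|f x| <= B}) -> sq_int mu f.
Proof.
move=> hfin mf [B hB]; split => //.
apply/integrableP; split; first exact: measurable_sq.
have -> : (\int[mu]_x `|(f x ^+ 2)%:E| = \int[mu]_x (f x ^+ 2)%:E)%E.
  by apply: eq_integral => x _; rewrite gee0_abs // lee_fin sqr_ge0.
apply: le_lt_trans (@int_sq_bnd R mu f B mf hB) _.
have hf : mu setT \is a fin_num by rewrite ge0_fin_numE // measure_ge0.
by rewrite -(fineK hf) -EFinM ltry.
Qed.
Lemma meas_inv (R : realType) : measurable_fun [set: R] (fun x : R => x^-1).
Proof.
have -> : [set: R] = [set 0] `|` ~` [set 0] by rewrite setUCr.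
apply/measurable_funU => //.
  by apply: measurableC.
split; first exact: measurable_fun_set1.
apply: open_continuous_measurable_fun.
  by apply: closed_openC; apply: accessible_closed_set1; apply: hausdorff_accessible; exact: Rhausdorff.
move=> x; rewrite inE /= => hx.
by apply: inv_continuous; apply/eqP.
Qed.
Lemma PpairE (R : realType) (lam eta : R) n :
  Ppair lam eta n = (Ppoly lam eta n, Ppoly lam eta n.+1).
Proof.
rewrite /Ppoly /=; case: (Ppair lam eta n) => p q /=; by [].
Qed.
Lemma PpolySS (R : realType) (lam eta : R) n x :
  (Ppoly lam eta n.+2).[x] = (x - lam) * (Ppoly lam eta n.+1).[x]
     - (if n is 0 then 1 else 1 + eta) * (Ppoly lam eta n).[x].
Proof.
have -> : Ppoly lam eta n.+2 = ('X - lam%:P) * Ppoly lam eta n.+1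
     - ((if n is 0 then 1 else 1 + eta) *: Ppoly lam eta n).
  by rewrite {1}/Ppoly /= PpairE.
by rewrite !hornerE.
Qed.
Lemma Ppoly0 (R : realType) (lam eta : R) x : (Ppoly lam eta 0).[x] = 1.
Proof. by rewrite /Ppoly /= hornerE. Qed.
Lemma Ppoly1 (R : realType) (lam eta : R) x : (Ppoly lam eta 1).[x] = x.
Proof. by rewrite /Ppoly /= hornerX. Qed.

Lemma cbound (R : realType) (eta : R) (n : nat) : 0 <= eta ->
  `|(if n is 0 then 1 else 1 + eta)| <= 1 + eta.
Proof. move=> he; case: n => [|n]; rewrite ger0_norm //; lra. Qed.

Lemma Pbound (R : realType) (lam eta m x : R) : 0 <= eta -> `|x| <= m ->
  forall n, `|(Ppoly lam eta n).[x]| <= (m + `|lam| + eta + 2) ^+ n.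
Proof.
move=> he hx.
set A := m + `|lam| + eta + 2.
have hm : 0 <= m by apply: le_trans hx.
have hA : 1 <= A by rewrite /A; have := normr_ge0 lam; lra.
suff H : forall n, `|(Ppoly lam eta n).[x]| <= A ^+ n /\
                   `|(Ppoly lam eta n.+1).[x]| <= A ^+ n.+1 by move=> n; case: (H n).
elim=> [|n [IH1 IH2]].
  by rewrite Ppoly0 Ppoly1 expr0 normr1 expr1 lexx /A; split => //; have := normr_ge0 lam; lra.
split => //.
rewrite PpolySS.
set a := A ^+ n.
have ha : 0 <= a by rewrite /a exprn_ge0 //; lra.
have e1 : A ^+ n.+1 = A * a by rewrite exprS.
have e2 : A ^+ n.+2 = A * (A * a) by rewrite !exprS.
rewrite e2; rewrite e1 in IH2.
have hxl : `|x - lam| <= m + `|lam| by apply: le_trans (ler_normB _ _) _; lra.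
have hc := @cbound R eta n he.
set c := (if n is 0 then 1 else 1 + eta) in hc *.
set p := (Ppoly lam eta n).[x] in IH1 *.
set q := (Ppoly lam eta n.+1).[x] in IH2 *.
apply: le_trans (ler_normB _ _) _.
rewrite !normrM.
have h1 : `|x - lam| * `|q| <= (m + `|lam|) * (A * a).
  apply: ler_pM => //; lra.
have h2 : `|c| * `|p| <= (1 + eta) * a by apply: ler_pM.
have h3 : a <= A * a by rewrite -{1}(mul1r a); apply: ler_wpM2r.
have h4 : (m + `|lam|) * (A * a) + (1 + eta) * (A * a) <= A * (A * a).
  rewrite -mulrDl; apply: ler_wpM2r; first by rewrite mulr_ge0 //; lra.
  rewrite /A; lra.
have h5 : (1 + eta) * a <= (1 + eta) * (A * a) by apply: ler_wpM2l => //; lra.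
lra.
Qed.

Definition Tsum (R : realType) (lam eta : R) (n : nat) (w x : R) :=
  \sum_(i < n) w ^+ i * (Ppoly lam eta i).[x].

Lemma Tsum_id (R : realType) (lam eta w x : R) n :
  (1 + lam * w + (eta + 1) * w ^+ 2 - x * w) * @Tsum R lam eta n.+1 w x
  = 1 + lam * w + eta * w ^+ 2 - (Ppoly lam eta n.+1).[x] * w ^+ n.+1
    + (if n is 0 then 1 else 1 + eta) * (Ppoly lam eta n).[x] * w ^+ n.+2.
Proof.
rewrite /Tsum; elim: n => [|n IH].
  rewrite big_ord_recr big_ord0 /= Ppoly0 Ppoly1; ring.
rewrite big_ord_recr /= mulrDr IH PpolySS /=.
set c := (if n is 0 then 1 else 1 + eta).
rewrite !exprS; ring.
Qed.

Lemma sq_int_poly (R : realType) (mu : {measure set R -> \bar R}) (M : R) (p : {poly R}) :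
  (mu setT < +oo)%E -> {ae mu, forall x, `|x| <= M} -> sq_int mu (fun y => p.[y]).
Proof.
move=> hfin hM; apply: sq_int_bnd => //; first exact: measurable_poly.
exists (\sum_(i < size p) `|p`_i| * `|M| ^+ i).
apply: filterS hM => x hx.
rewrite horner_coef.
apply: le_trans (ler_norm_sum _ _ _) _.
apply: ler_sum => i _.
rewrite normrM normrX; apply: ler_wpM2l => //.
apply: lerXn2r; rewrite ?nnegrE //.
by apply: le_trans hx (ler_norm _).
Qed.

Lemma sq_int_psum (R : realType) (mu : {measure set R -> \bar R}) (M lam eta : R) (a : nat -> R) N :
  (mu setT < +oo)%E -> {ae mu, forall x, `|x| <= M} ->
  sq_int mu (fun y => \sum_(i < N) a i * (Ppoly lam eta i).[y]).
Proof.
move=> hfin hM.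
have -> : (fun y => \sum_(i < N) a i * (Ppoly lam eta i).[y])
   = (fun y => (\sum_(i < N) a i *: Ppoly lam eta i).[y]).
  by apply: funext => y; rewrite horner_sum; apply: eq_bigr => i _; rewrite hornerZ.
exact: (@sq_int_poly R mu M).
Qed.

Lemma sq_int_scale (R : realType) (mu : {measure set R -> \bar R}) (a : R) (f : R -> R) :
  sq_int mu f -> sq_int mu (fun y => a * f y).
Proof.
move=> [mf hi]; split.
  exact: measurable_funM (measurable_cst _) mf.
have -> : (fun x => ((a * f x) ^+ 2)%:E) = (fun x => (a ^+ 2)%:E * (f x ^+ 2)%:E)%E.
  by apply: funext => x; rewrite exprMn EFinM.
exact: integrableZl.
Qed.

Lemma Dsum (R : realType) (lam eta : R) (mu : {measure set R -> \bar R}) (M : R)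
  (D : (R -> R) -> (R -> R)) (a : nat -> R) :
  (mu setT < +oo)%E -> {ae mu, forall x, `|x| <= M} -> creation_op lam eta mu D ->
  forall N, {ae mu, forall x, D (fun y => \sum_(i < N) a i * (Ppoly lam eta i).[y]) x
                  = \sum_(i < N) a i * (Ppoly lam eta i.+1).[x]}.
Proof.
move=> hfin hM [hlin hhom _ hP].
have sqP n : sq_int mu (fun y => (Ppoly lam eta n).[y]) by exact: (@sq_int_poly R mu M).
elim=> [|N IH].
  have -> : (fun y => \sum_(i < 0) a i * (Ppoly lam eta i).[y])
          = (fun y => 0 * (Ppoly lam eta 0).[y]).
    by apply: funext => y; rewrite big_ord0 mul0r.
  apply: filterS (hhom 0 _ (sqP 0)) => x ->.
  by rewrite big_ord0 mul0r.
have -> : (fun y => \sum_(i < N.+1) a i * (Ppoly lam eta i).[y])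
   = (fun y => \sum_(i < N) a i * (Ppoly lam eta i).[y]) \+
     (fun y => a N * (Ppoly lam eta N).[y]).
  by apply: funext => y; rewrite big_ord_recr.
have h1 := hlin _ _ (@sq_int_psum R mu M lam eta a N hfin hM)
   (@sq_int_scale R mu (a N) _ (sqP N)).
have h2 := hhom (a N) _ (sqP N).
apply: (filter_app _ _ (hP N)); move: h1 h2 IH; apply: filterS3 => x -> -> -> ->.
by rewrite big_ord_recr.
Qed.

Lemma approx_ae (R : realType) (lam eta : R) (mu : {measure set R -> \bar R})
  (D : (R -> R) -> (R -> R)) (f g : R -> R) :
  (mu setT < +oo)%E -> creation_op lam eta mu D ->
  measurable_fun setT f -> (exists B, {ae mu, forall x, `|f x| <= B}) ->
  measurable_fun setT g ->
  (forall e, 0 < e -> exists s : R -> R, [/\ measurable_fun setT s,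
        (exists B, {ae mu, forall x, `|s x| <= B}),
        {ae mu, forall x, `|f x - s x| <= e} &
        {ae mu, forall x, `|D s x - g x| <= e}]) ->
  {ae mu, forall x, D f x = g x}.
Proof.
move=> hfin [hlin hhom [C hC] _] mf fB mg happ.
have sf : sq_int mu f by exact: sq_int_bnd.
have mDf : measurable_fun setT (D f) by case: (hC f sf) => -[].
pose h x := D f x - g x.
have mh : measurable_fun setT h by exact: measurable_funB.
have hfin' : mu setT \is a fin_num by rewrite ge0_fin_numE // measure_ge0.
set m := fine (mu setT).
have em : mu setT = m%:E by rewrite /m fineK.
have m0 : 0 <= m by rewrite -lee_fin -em measure_ge0.
pose K := 2 * (`|C| + 1) * m.
have K0 : 0 <= K by rewrite /K; have := normr_ge0 C; nra.
have key : forall e, 0 < e -> e <= 1 -> (\int[mu]_x (h x ^+ 2)%:E <= (K * e ^+ 2)%:E)%E.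
  move=> e e0 e1.
  have [s [ms [Bs sB] fs Dsg]] := happ e e0.
  have ss : sq_int mu s by apply: sq_int_bnd => //; exists Bs.
  have mDs : measurable_fun setT (D s) by case: (hC s ss) => -[].
  pose dd := f \+ (fun y => -1 * s y).
  have sdd : sq_int mu dd.
    apply: sq_int_bnd => //.
      by apply: measurable_funD => //; exact: measurable_funM (measurable_cst _) ms.
    case: fB => B hB; exists (B + Bs).
    move: hB sB; apply: filterS2 => x h1 h2.
    rewrite /dd /= mulN1r; apply: le_trans (ler_normB _ _) _; lra.
  have mDd : measurable_fun setT (D dd) by case: (hC dd sdd) => -[].
  have eDd : {ae mu, forall x, D dd x = D f x - D s x}.
    move: (hlin f _ sf (@sq_int_scale R mu (-1) s ss)) (hhom (-1) s ss).
    by apply: filterS2 => x -> ->; rewrite mulN1r.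
  have i1 : (\int[mu]_x ((D f x - D s x) ^+ 2)%:E = \int[mu]_x ((D dd x) ^+ 2)%:E)%E.
    apply: ae_eq_integral => //.
    - by apply: measurable_sq; exact: measurable_funB.
    - exact: measurable_sq.
    by apply: filterS eDd => x -> _.
  have i2 : (\int[mu]_x ((D dd x) ^+ 2)%:E <= (`|C| * (e ^+ 2 * m))%:E)%E.
    case: (hC dd sdd) => _ h2.
    apply: le_trans h2 _.
    have i3 : (\int[mu]_x (dd x ^+ 2)%:E <= (e ^+ 2 * m)%:E)%E.
      rewrite EFinM -em.
      apply: int_sq_bnd; first by case: sdd.
      by apply: filterS fs => x; rewrite /dd /= mulN1r.
    have i4 : (0 <= \int[mu]_x (dd x ^+ 2)%:E)%E.
      by apply: integral_ge0 => x _; rewrite lee_fin sqr_ge0.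
    rewrite EFinM.
    apply: le_trans (lee_wpmul2r i4 (_ : C%:E <= `|C|%:E)%E) _.
      by rewrite lee_fin ler_norm.
    by apply: lee_wpmul2l => //; rewrite lee_fin.
  have mA : measurable_fun setT (fun x => D f x - D s x) by exact: measurable_funB.
  have i5 : (\int[mu]_x (h x ^+ 2)%:E <=
             \int[mu]_x (2 * (D f x - D s x) ^+ 2 + 2 * e ^+ 2)%:E)%E.
    apply: ae_ge0_le_integral => //.
    - by move=> x _; rewrite lee_fin sqr_ge0.
    - exact: measurable_sq.
    - by move=> x _; rewrite lee_fin; have := sqr_ge0 (D f x - D s x); have := sqr_ge0 e; nra.
    - apply/measurable_EFinP; apply: measurable_funD; last exact: measurable_cst.
      by apply: measurable_funM; [exact: measurable_cst| exact: measurable_funX].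
    apply: filterS Dsg => x hx _; rewrite lee_fin.
    have -> : h x = (D f x - D s x) + (D s x - g x) by rewrite /h; ring.
    move: hx; rewrite ler_norml => /andP[b1 b2].
    set a := D f x - D s x; set b := D s x - g x in b1 b2 *.
    have h1 := sqr_ge0 (a - b).
    have h2 : 0 <= (e - b) * (e + b) by apply: mulr_ge0; lra.
    nra.
  have i6 : (\int[mu]_x (2 * (D f x - D s x) ^+ 2 + 2 * e ^+ 2)%:E =
     2%:E * \int[mu]_x ((D f x - D s x) ^+ 2)%:E + (2 * e ^+ 2)%:E * mu setT)%E.
    under eq_integral do rewrite EFinD EFinM.
    rewrite ge0_integralD //.
    - rewrite ge0_integralZl_EFin //.
      + by rewrite integral_cst.
      + by move=> x _; rewrite lee_fin sqr_ge0.
      + exact: measurable_sq.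
    - by move=> x _; rewrite -EFinM lee_fin mulr_ge0 // sqr_ge0.
    - apply/measurable_EFinP => /=.
      by apply: measurable_funM; [exact: measurable_cst| exact: measurable_funX].
    - by move=> x _; rewrite lee_fin mulr_ge0 // sqr_ge0.
  apply: le_trans i5 _; rewrite i6 i1 em.
  apply: le_trans (leeD2r _ (lee_wpmul2l (_ : 0 <= 2%:E)%E i2)) _ => //.
  rewrite -!EFinM -EFinD lee_fin /K.
  have := normr_ge0 C; have := sqr_ge0 e; nra.
have hz : ae_eq mu setT (fun x => (h x ^+ 2)%:E) (cst 0%E).
  apply/ae_eq_integral_abs => //; first exact: measurable_sq.
  have -> : (\int[mu]_x `|(h x ^+ 2)%:E| = \int[mu]_x (h x ^+ 2)%:E)%E.
    by apply: eq_integral => x _; rewrite gee0_abs // lee_fin sqr_ge0.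
  apply/eqP; rewrite eq_le; apply/andP; split; last first.
    by apply: integral_ge0 => x _; rewrite lee_fin sqr_ge0.
  apply/lee_addgt0Pr => dl dl0; rewrite add0e.
  pose e := Num.min 1 (dl / (K + 1)).
  have e0 : 0 < e by rewrite lt_min ltr01 divr_gt0 //; lra.
  have e1 : e <= 1 by rewrite ge_min lexx.
  have e2 : e * (K + 1) <= dl.
    have : e <= dl / (K + 1) by rewrite ge_min lexx orbT.
    by rewrite ler_pdivlMr //; lra.
  apply: le_trans (key e e0 e1) _; rewrite lee_fin; nra.
apply: filterS hz => x /(_ I) /= /eqP.
by rewrite eqe sqrf_eq0 subr_eq0 => /eqP.
Qed.

Lemma basic_ineq (R : realType) (lam eta m w x : R) : 0 <= eta -> `|x| <= m ->
  (m + `|lam| + eta + 2) * `|w| <= 1/4 ->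
  [/\ `|w| <= 1/8,
      `|(1 + lam * w + eta * w ^+ 2) - 1| <= 1/4,
      `|(1 + lam * w + (eta + 1) * w ^+ 2 - x * w) - 1| <= 1/4 &
      `|(1 + lam * w + (eta + 1) * w ^+ 2) - 1| <= 1/4].
Proof.
move=> he hx hA.
have m0 : 0 <= m by apply: le_trans hx.
have l0 := normr_ge0 lam; have w0 := normr_ge0 w; have x0 := normr_ge0 x.
have hw8 : `|w| <= 1/8 by nra.
have hw2 : `|w| ^+ 2 <= `|w| by nra.
have e1 : `|(1 + lam * w + eta * w ^+ 2) - 1| <= `|lam| * `|w| + eta * `|w| ^+ 2.
  have -> : 1 + lam * w + eta * w ^+ 2 - 1 = lam * w + eta * w ^+ 2 by ring.
  apply: le_trans (ler_normD _ _) _.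
  by rewrite !normrM (ger0_norm he) expr2.
have e2 : `|(1 + lam * w + (eta + 1) * w ^+ 2 - x * w) - 1|
          <= `|lam| * `|w| + (eta + 1) * `|w| ^+ 2 + `|x| * `|w|.
  have -> : 1 + lam * w + (eta + 1) * w ^+ 2 - x * w - 1
            = lam * w + (eta + 1) * w ^+ 2 - x * w by ring.
  apply: le_trans (ler_normB _ _) _.
  apply: lerD; last by rewrite normrM. apply: le_trans (ler_normD _ _) _.
  rewrite !normrM (@ger0_norm _ (eta + 1)) ?expr2 //; lra.
have e3 : `|(1 + lam * w + (eta + 1) * w ^+ 2) - 1|
          <= `|lam| * `|w| + (eta + 1) * `|w| ^+ 2.
  have -> : 1 + lam * w + (eta + 1) * w ^+ 2 - 1
            = lam * w + (eta + 1) * w ^+ 2 by ring.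
  apply: le_trans (ler_normD _ _) _.
  rewrite !normrM (@ger0_norm _ (eta + 1)) ?expr2 //; lra.
split => //; nra.
Qed.

Lemma pow_split (R : realType) (A w : R) n k :
  A ^+ n * `|w| ^+ (n + k) = (A * `|w|) ^+ n * `|w| ^+ k.
Proof. by rewrite exprMn exprD mulrA. Qed.

Lemma pt_main (R : realType) (lam eta m w x : R) (n : nat) : 0 <= eta -> `|x| <= m ->
  (m + `|lam| + eta + 2) * `|w| <= 1/4 ->
  let A := m + `|lam| + eta + 2 in
  let Q := 1 + lam * w + (eta + 1) * w ^+ 2 in
  let u := 1 + lam * w + eta * w ^+ 2 in
  [/\ `|(1 - x * (w / Q))^-1| <= 2,
      `|(1 - x * (w / Q))^-1 - \sum_(i < n.+1) (Q / u * w ^+ i) * (Ppoly lam eta i).[x]|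
         <= 3 * (A + 1 + eta) * (A * `|w|) ^+ n &
      w != 0 ->
      `|\sum_(i < n.+1) (Q / u * w ^+ i) * (Ppoly lam eta i.+1).[x]
         - ((x - w) / u) * (1 - x * (w / Q))^-1|
         <= 3 * (A + 1 + eta) * (A * `|w|) ^+ n].
Proof.
move=> he hx hA A Q u.
have [hw8 hu hQx hQ] := @basic_ineq R lam eta m w x he hx hA.
move: hu; rewrite -/u ler_norml => /andP[u1 u2].
move: hQx; rewrite -/Q ler_norml => /andP[q1 q2].
move: hQ; rewrite -/Q ler_norml => /andP[Q1 Q2].
have u0 : 0 < u by lra.
have Q0 : 0 < Q by lra.
set V := Q - x * w in q1 q2.
have V0 : 0 < V by lra.
have m0 : 0 <= m by apply: le_trans hx; exact: normr_ge0.
have A1 : 2 <= A by rewrite /A; have := normr_ge0 lam; lra.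
have w0 := normr_ge0 w.
set rho := A * `|w|.
have rho0 : 0 <= rho by rewrite /rho; apply: mulr_ge0 => //; lra.
have rho1 : rho <= 1/4 by [].
set r := rho ^+ n.
have r0 : 0 <= r by rewrite /r exprn_ge0.
have hPb k : `|(Ppoly lam eta k).[x]| <= A ^+ k by exact: Pbound.
have ef : (1 - x * (w / Q))^-1 = Q / V.
  have -> : 1 - x * (w / Q) = V / Q by rewrite /V; field; lra.
  by rewrite invf_div.
have coef : Q / u / V <= 3.
  rewrite ler_pdivrMr // ler_pdivrMr //; nra.
have coef0 : 0 <= Q / u / V by apply: divr_ge0; [apply: divr_ge0|]; lra.
split.
- rewrite ef ger0_norm; last by apply: divr_ge0; lra.
  by rewrite ler_pdivrMr //; lra.
- have hT := @Tsum_id R lam eta w x n.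
  rewrite -/Q -/V /Tsum in hT.
  set c := (if n is 0 then 1 else 1 + eta) in hT.
  have hc : `|c| <= 1 + eta by exact: cbound.
  set p0 := (Ppoly lam eta n).[x] in hT.
  set p1 := (Ppoly lam eta n.+1).[x] in hT.
  set E := p1 * w ^+ n.+1 - c * p0 * w ^+ n.+2.
  have es : \sum_(i < n.+1) (Q / u * w ^+ i) * (Ppoly lam eta i).[x]
          = Q / u * \sum_(i < n.+1) w ^+ i * (Ppoly lam eta i).[x].
    by rewrite mulr_sumr; apply: eq_bigr => i _; rewrite mulrA.
  rewrite es.
  have eT : \sum_(i < n.+1) w ^+ i * (Ppoly lam eta i).[x] = (u - E) / V.
    apply: (mulfI (_ : V != 0)); first by rewrite gt_eqF.
    rewrite hT /E /u; field; lra.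
  rewrite eT.
  rewrite ef.
  have -> : Q / V - Q / u * ((u - E) / V) = Q / u / V * E by field; lra.
  rewrite normrM (ger0_norm coef0).
  have hE : `|E| <= (A + 1 + eta) * r.
    rewrite /E; apply: le_trans (ler_normB _ _) _.
    rewrite (normrM p1) normrX (normrM (c * p0)) normrM normrX.
    have b1 : `|p1| * `|w| ^+ n.+1 <= rho * r.
      apply: le_trans (ler_wpM2r (exprn_ge0 _ w0) (hPb n.+1)) _.
      by rewrite /r /rho -exprMn exprS.
    have b2 : `|c| * `|p0| * `|w| ^+ n.+2 <= (1 + eta) * r.
      have hw2 : `|w| ^+ 2 <= 1 by rewrite expr2; nra.
      have := hPb n; rewrite -/p0 => hp0.
      have -> : `|w| ^+ n.+2 = `|w| ^+ n * `|w| ^+ 2 by rewrite -exprD addn2.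
      have hh : `|p0| * `|w| ^+ n <= r.
        apply: le_trans (ler_wpM2r (exprn_ge0 _ w0) hp0) _.
        by rewrite /r /rho exprMn.
      have p00 := normr_ge0 p0; have c0 := normr_ge0 c.
      have wn0 : 0 <= `|w| ^+ n by exact: exprn_ge0.
      have w20 : 0 <= `|w| ^+ 2 by exact: exprn_ge0.
      have -> : `|c| * `|p0| * (`|w| ^+ n * `|w| ^+ 2) = `|c| * (`|p0| * `|w| ^+ n) * `|w| ^+ 2
        by rewrite !mulrA.
      rewrite -[X in _ <= X]mulr1.
      apply: ler_pM => //; try by rewrite mulr_ge0 // mulr_ge0.
      by apply: ler_pM.
    nra.
  apply: le_trans (ler_wpM2l coef0 hE) _.
  rewrite mulrA; apply: ler_wpM2r => //.
  apply: ler_wpM2r; first by lra.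
  exact: coef.
- move=> wn0.
  have hT := @Tsum_id R lam eta w x n.+1.
  rewrite -/Q -/V /Tsum in hT.
  rewrite big_ord_recl /= expr0 mul1r Ppoly0 in hT.
  set p1 := (Ppoly lam eta n.+1).[x] in hT.
  set p2 := (Ppoly lam eta n.+2).[x] in hT.
  set E := p2 * w ^+ n.+1 - (1 + eta) * p1 * w ^+ n.+2.
  have es : \sum_(i < n.+1) (Q / u * w ^+ i) * (Ppoly lam eta i.+1).[x]
          = Q / u * \sum_(i < n.+1) w ^+ i * (Ppoly lam eta i.+1).[x].
    by rewrite mulr_sumr; apply: eq_bigr => i _; rewrite mulrA.
  rewrite es.
  have eS : \sum_(i < n.+1) w ^+ i * (Ppoly lam eta i.+1).[x] = (x - w - E) / V.
    have hS : \sum_(i < n.+1) w ^+ (bump 0 i) * (Ppoly lam eta (bump 0 i)).[x]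
            = w * \sum_(i < n.+1) w ^+ i * (Ppoly lam eta i.+1).[x].
      by rewrite mulr_sumr; apply: eq_bigr => i _; rewrite /bump /= exprS mulrA.
    rewrite hS in hT.
    apply: (mulfI (_ : V * w != 0)); first by rewrite mulf_neq0 // gt_eqF.
    set S := \sum_(i < n.+1) _ in hT *.
    have hT' : V * w * S = (V * (1 + w * S)) - V by ring.
    have V0' : 1 + lam * w + (eta + 1) * (w * w) - x * w != 0 by rewrite -expr2 -/Q -/V gt_eqF.
    rewrite hT' hT /E /u /V /Q !exprS; field. exact: V0'.
  rewrite eS ef.
  have -> : Q / u * ((x - w - E) / V) - (x - w) / u * (Q / V) = - (Q / u / V * E)
    by field; lra.
  rewrite normrN normrM (ger0_norm coef0).
  have hE : `|E| <= (A + 1 + eta) * r.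
    rewrite /E; apply: le_trans (ler_normB _ _) _.
    rewrite (normrM p2) normrX (normrM ((1 + eta) * p1)) normrM normrX.
    rewrite (@ger0_norm _ (1 + eta)); last by lra.
    have rr : rho * r <= r by rewrite -[X in _ <= X]mul1r; apply: ler_wpM2r => //; lra.
    have b1 : `|p2| * `|w| ^+ n.+1 <= A * r.
      apply: le_trans (ler_wpM2r (exprn_ge0 _ w0) (hPb n.+2)) _.
      have -> : A ^+ n.+2 * `|w| ^+ n.+1 = A * (rho * r) by rewrite /r /rho -exprS exprMn [A ^+ n.+2]exprS mulrA.
      by apply: ler_wpM2l => //; lra.
    have b2 : (1 + eta) * `|p1| * `|w| ^+ n.+2 <= (1 + eta) * r.
      rewrite -mulrA; apply: ler_wpM2l; first lra.
      apply: le_trans (ler_wpM2r (exprn_ge0 _ w0) (hPb n.+1)) _.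
      have -> : A ^+ n.+1 * `|w| ^+ n.+2 = (rho * r) * `|w|.
        by rewrite /r /rho -exprS exprMn -mulrA -exprSr.
      apply: le_trans rr; rewrite -[X in _ <= X]mulr1; apply: ler_wpM2l; first by rewrite mulr_ge0.
      lra.
    nra.
  apply: le_trans (ler_wpM2l coef0 hE) _.
  rewrite mulrA; apply: ler_wpM2r => //.
  apply: ler_wpM2r; first by lra.
  exact: coef.
Qed.

Lemma alg2 (R : realType) (lam eta z w x : R) : 0 <= eta -> z != 0 -> w != 0 ->
  w = z * (1 + lam * w + (eta + 1) * w ^+ 2) ->
  0 <= 1 - lam * z - 2 * z * (eta + 1) * w -> 1 - z * w != 0 ->
  (x - w) / (1 + lam * w + eta * w ^+ 2) =
  x * (4 * z ^+ 2 * (eta + 1) ^+ 2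
                     / ((2 * eta + 1 + lam * z
                         + Num.sqrt ((1 - lam * z) ^+ 2 - 4 * z ^+ 2 * (eta + 1)))
                        * (1 - lam * z
                           - Num.sqrt ((1 - lam * z) ^+ 2 - 4 * z ^+ 2 * (eta + 1)))))
                - 2 * z * (eta + 1)
                  / (2 * eta + 1 + lam * z
                     + Num.sqrt ((1 - lam * z) ^+ 2 - 4 * z ^+ 2 * (eta + 1))).
Proof.
move=> he z0 w0 hw ht hzw.
set t := 1 - lam * z - 2 * z * (eta + 1) * w.
have eR : (1 - lam * z) ^+ 2 - 4 * z ^+ 2 * (eta + 1) = t ^+ 2.
  have : t ^+ 2 - ((1 - lam * z) ^+ 2 - 4 * z ^+ 2 * (eta + 1))
       = 4 * z * (eta + 1) * (z * (1 + lam * w + (eta + 1) * w ^+ 2) - w) by rewrite /t; ring.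
  by rewrite -hw subrr mulr0 => /eqP; rewrite subr_eq0 => /eqP <-.
rewrite eR sqrtr_sqr (ger0_norm ht).
have hu : 1 + lam * w + eta * w ^+ 2 = w * (1 - z * w) / z.
  apply: (mulIf z0); rewrite mulfVK //.
  have -> : (1 + lam * w + eta * w ^+ 2) * z = z * (1 + lam * w + (eta + 1) * w ^+ 2) - z * w ^+ 2 by ring.
  by rewrite -hw; ring.
rewrite hu /t.
have e1 : eta + 1 != 0 by rewrite gt_eqF //; lra.
have e2 : 2 * eta + 1 + lam * z + (1 - lam * z - 2 * z * (eta + 1) * w) = 2 * (eta + 1) * (1 - z * w) by ring.
have e3 : 1 - lam * z - (1 - lam * z - 2 * z * (eta + 1) * w) = 2 * z * (eta + 1) * w by ring.
rewrite e2 e3.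
field.
by rewrite hzw e1 w0 z0.
Qed.

Theorem mainTheorem4 (R : realType) (lam eta : R) (heta : 0 <= eta)
    (mu : {measure set R -> \bar R}) (hmu : orth_measure lam eta mu)
    (D : (R -> R) -> (R -> R)) (hD : creation_op lam eta mu D)
    (Winv : R -> R) (hW : local_inverse_Psi lam eta Winv) :
  exists eps : R, 0 < eps /\
    forall z : R, `|z| < eps ->
      {ae mu, forall x,
         D (fun y => (1 - y * z)^-1) x
         = ((x - Winv z) / (1 + lam * Winv z + eta * (Winv z) ^+ 2))
           * (1 - x * z)^-1}
      /\ (z != 0 ->
          {ae mu, forall x,
             D (fun y => (1 - y * z)^-1) x
             = (x * (4 * z ^+ 2 * (eta + 1) ^+ 2
                     / ((2 * eta + 1 + lam * z
                         + Num.sqrt ((1 - lam * z) ^+ 2 - 4 * z ^+ 2 * (eta + 1)))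
                        * (1 - lam * z
                           - Num.sqrt ((1 - lam * z) ^+ 2 - 4 * z ^+ 2 * (eta + 1)))))
                - 2 * z * (eta + 1)
                  / (2 * eta + 1 + lam * z
                     + Num.sqrt ((1 - lam * z) ^+ 2 - 4 * z ^+ 2 * (eta + 1))))
               * (1 - x * z)^-1}).
Proof.
case: hmu => hfin [M hM0] _ _.
have hS := @aeS R mu M hM0.
case: (hD) => hlin hhom _ hP.
case: hW => W0 Wc [d [d0 hPsi]].
pose m := `|M|.
pose A := m + `|lam| + eta + 2.
have A2 : 2 <= A by rewrite /A /m; have := normr_ge0 M; have := normr_ge0 lam; lra.
pose dl := (4 * A)^-1.
have dl0 : 0 < dl by rewrite /dl invr_gt0; lra.
have [e1 e10 he1] : exists2 e1 : R, 0 < e1 & forall z, `|z| < e1 -> `|Winv z| < dl.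
  have Wc' : Winv x @[x --> (0:R)] --> Winv 0 := Wc.
  move: Wc'; rewrite W0 => /cvgr_dist_lt /(_ _ dl0) /nbhs_ballP [e1 e10 h].
  exists e1 => // z hz.
  have := h z; rewrite /ball /= sub0r normrN => /(_ hz).
  by rewrite sub0r normrN.
exists (Num.min e1 d); split; first by rewrite lt_min e10 d0.
move=> z; rewrite lt_min => /andP[hz1 hz2].
have hw := he1 z hz1.
have hPz := hPsi z hz2.
set w := Winv z in hw hPz *.
have hAw : A * `|w| <= 1/4.
  have : A * `|w| <= A * dl by apply: ler_wpM2l; [lra| exact: ltW].
  have -> : A * dl = 1/4 by rewrite /dl; field; lra.
  by [].
set Q := 1 + lam * w + (eta + 1) * w ^+ 2.
set u := 1 + lam * w + eta * w ^+ 2.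
have h0m : `|0 : R| <= m by rewrite normr0 /m normr_ge0.
have [hw8 hu _ hQ] := @basic_ineq R lam eta m w 0 heta h0m hAw.
move: hu; rewrite -/u ler_norml => /andP[u1 u2].
move: hQ; rewrite -/Q ler_norml => /andP[Q1 Q2].
have ez : z = w / Q by rewrite -hPz /Psi.
have P1 : {ae mu, forall x, D (fun y => (1 - y * z)^-1) x = ((x - w) / u) * (1 - x * z)^-1}.
  have Q0 : 0 < Q by lra.
  have u0 : 0 < u by lra.
  have hSm : {ae mu, forall x, `|x| <= m}.
    by apply: filterS hS => x hx; apply: le_trans hx (ler_norm M).
  have mf : measurable_fun setT (fun y : R => (1 - y * z)^-1).
    have -> : (fun y : R => (1 - y * z)^-1) = (fun t : R => t^-1) \o (fun y => 1 - y * z) by [].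
    apply: measurableT_comp; first exact: meas_inv.
    have -> : (fun y : R => 1 - y * z) = (cst 1) \- (fun y => y * z) by [].
    apply: measurable_funB; first exact: measurable_cst.
    exact: mulrr_measurable.
  case: (eqVneq w 0) => [w0|wn0].
    have z00 : z = 0 by rewrite ez w0 mul0r.
    have -> : (fun y : R => (1 - y * z)^-1) = (fun y => (Ppoly lam eta 0).[y]).
      by apply: funext => y; rewrite Ppoly0 z00 mulr0 subr0 invr1.
    apply: filterS (hP 0) => x ->.
    rewrite Ppoly1 /u w0 z00 !mulr0 subr0 expr0n /= mulr0 !addr0 invr1 !mulr1.
    by rewrite subr0 divr1.
  apply: (@approx_ae R lam eta mu D) => //.
  - exists 2; apply: filterS hSm => x hx.
    by case: (@pt_main R lam eta m w x 0 heta hx hAw); rewrite -/Q -ez.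
  - apply: measurable_funM => //.
    apply: measurable_funM; last exact: measurable_cst.
    by apply: measurable_funB; [exact: measurable_id| exact: measurable_cst].
  move=> e e0.
  pose c := 3 * (A + 1 + eta).
  have c0 : 0 < c by rewrite /c; lra.
  pose n := Num.bound (c / e).
  have hn : c / e < n%:R by apply: archi_boundP; apply: divr_ge0; lra.
  have hn4 : (n%:R : R) < 4 ^+ n.
    have := ltn_expl n (isT : (1 < 4)%N).
    by rewrite -(ltr_nat R) natrX.
  have hcn : c * (A * `|w|) ^+ n <= e.
    have h4 : (A * `|w|) ^+ n <= (1/4) ^+ n.
      apply: lerXn2r; rewrite ?nnegrE //.
        by apply: mulr_ge0; [lra| exact: normr_ge0].
    apply: le_trans (ler_wpM2l (ltW c0) h4) _.
    rewrite expr_div_n expr1n mul1r.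
    have p4 : 0 < (4 : R) ^+ n by apply: exprn_gt0; lra.
    rewrite ler_pdivrMr //.
    move: hn; rewrite ltr_pdivrMr // => hn.
    nra.
  exists (fun y => \sum_(i < n.+1) (Q / u * w ^+ i) * (Ppoly lam eta i).[y]).
  split.
  - by case: (@sq_int_psum R mu M lam eta (fun i => Q / u * w ^+ i) n.+1 hfin hS).
  - exists (2 + e); apply: filterS hSm => x hx.
    case: (@pt_main R lam eta m w x n heta hx hAw); rewrite -/Q -/u -ez => h1 h2 _.
    set s := \sum_(i < n.+1) _ in h2 *.
    have := ler_normB ((1 - x * z)^-1) ((1 - x * z)^-1 - s).
    have -> : (1 - x * z)^-1 - ((1 - x * z)^-1 - s) = s by ring.
    have h2' := le_trans h2 hcn; lra.
  - apply: filterS hSm => x hx.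
    case: (@pt_main R lam eta m w x n heta hx hAw); rewrite -/Q -/u -ez => _ h2 _.
    by apply: le_trans h2 _.
  - move: (@Dsum R lam eta mu M D (fun i => Q / u * w ^+ i) hfin hS hD n.+1).
    apply: filterS2 hSm => x hx ->.
    case: (@pt_main R lam eta m w x n heta hx hAw); rewrite -/Q -/u -ez => _ _ /(_ wn0) h3.
    by apply: le_trans h3 _.
have Q0 : 0 < Q by lra.
have hzw : `|z| <= 2 * `|w|.
  rewrite ez normrM normfV (ger0_norm (ltW Q0)) ler_pdivrMr //.
  have := normr_ge0 w; nra.
have al := normr_ge0 lam; have aw := normr_ge0 w; have az := normr_ge0 z.
have hm0 : 0 <= m by rewrite /m normr_ge0.
have b1 : `|lam * z| <= 1/2.
  rewrite normrM; apply: le_trans (_ : `|lam| * (2 * `|w|) <= _).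
    exact: ler_wpM2l.
  rewrite /A in hAw; nra.
have b2 : `|z * w| <= 1/4 * `|w|.
  rewrite normrM; apply: le_trans (_ : (2 * `|w|) * `|w| <= _).
    exact: ler_wpM2r.
  rewrite /A in hAw; nra.
have b3 : `|(eta + 1) * (z * w)| <= 1/4.
  rewrite normrM (ger0_norm (_ : 0 <= eta + 1)); last lra.
  rewrite /A in hAw.
  have : (eta + 1) * `|z * w| <= (eta + 1) * (1/4 * `|w|) by apply: ler_wpM2l => //; lra.
  nra.
split => // z0.
have wn0 : w != 0 by apply: contra_neq z0 => w0; rewrite ez w0 mul0r.
apply: filterS P1 => x ->; congr (_ * _).
apply: alg2 => //.
- by rewrite ez divfK // gt_eqF.
- move: b1 b3; rewrite !ler_norml => /andP[c1 c2] /andP[c3 c4].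
  have -> : 1 - lam * z - 2 * z * (eta + 1) * w = 1 - lam * z - 2 * ((eta + 1) * (z * w)) by ring.
  lra.
- move: b2; rewrite ler_norml => /andP[c1 c2].
  rewrite subr_eq0 eq_sym; apply/negP => /eqP h; rewrite h in c2; lra.
Qed.
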